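(* Let $p$ be an odd prime, $r,m$ positive integers and $s\in\{1,2,\dots,mp^{r-1}\}$. Then $$\binom{mp^{r-1}}{s}\binom{2sp}{sp}\binom{2(mp^{r-1}-s)p}{(mp^{r-1}-s)p}\equiv\begin{cases}\binom{m}{s}\binom{2s}{s}\binom{2(m-s)}{m-s}(1+9m)\pmod{p^{r+2}} & \text{if } r=1 \text{ and } p=3,\\ \binom{mp^{r-1}}{s}\binom{2s}{s}\binom{2(mp^{r-1}-s)}{mp^{r-1}-s}\pmod{p^{r+2}} & \text{if } r>1 \text{ or } p>3.\end{cases}$$ *)

(* Defs.v *)
From mathcomp Require Import all_boot.

(* Main.v *)
Require Import Defs.
From mathcomp Require Import all_boot.
From mathcomp Require Import all_algebra zify ring.
Set Implicit Arguments. Unset Strict Implicit. Unset Printing Implicit Defensive.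
Import GRing.Theory Num.Theory.
Definition P (p j : nat) := \prod_(0 <= k < p.-1) (j*p + k.+1).

Lemma fact_add x m : (x+m)`! = x`! * \prod_(0<=k<m) (x+k.+1).
Proof.
elim: m => [|m IH]; first by rewrite big_geq // addn0 muln1.
rewrite big_nat_recr //= addnS factS IH; ring.
Qed.

Lemma fact_mulp p n : 0 < p -> (n*p)`! = p^n * n`! * \prod_(0<=i<n) P p i.
Proof.
move=> p0; elim: n => [|n IH]; first by rewrite big_geq // fact0.
rewrite mulSn addnC fact_add IH big_nat_recr //= factS expnS.
rewrite -(prednK p0) big_nat_recr //= prednK // /P.
have -> : n * p + p = n.+1 * p by rewrite mulSn addnC.
ring.
Qed.

Lemma key_rel p s : 0 < p ->
  'C(2*s*p, s*p) * \prod_(0<=i<s) P p i = 'C(2*s,s) * \prod_(0<=i<s) P p (i+s).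
Proof.
move=> p0.
have h1 := bin_fact (leq_addr (s*p) (s*p)).
have h2 := bin_fact (leq_addr s s).
rewrite addnK in h1; rewrite addnK in h2.
have e1 : s*p + s*p = (s+s)*p by rewrite mulnDl.
rewrite e1 fact_mulp // fact_mulp // in h1.
rewrite (big_cat_nat _ (leq_addr s s)) //= in h1.
have ea : \prod_(s <= i < s+s) P p i = \prod_(0<=i<s) P p (i+s).
  by rewrite -{1}[s]add0n big_addn addnK.
rewrite ea in h1.
rewrite -h2 in h1.
have e2 : 2*s*p = (s+s)*p by rewrite mul2n -addnn.
have e3 : 2*s = s + s by rewrite mul2n -addnn.
rewrite e2 e3.
set B := \prod_(0<=i<s) P p i in h1 *.
set A := \prod_(0<=i<s) P p (i+s) in h1 *.
set X := 'C((s+s)*p, s*p) in h1 *.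
set X' := 'C(s+s, s) in h1 *.
have pos : 0 < p^(s+s) * s`! * s`! * B.
  rewrite !muln_gt0 expn_gt0 p0 !fact_gt0 /B prodn_gt0 // => i.
  by rewrite /P prodn_gt0 // => k; rewrite addnS.
apply/eqP; rewrite -(eqn_pmul2l pos); apply/eqP.
move: h1; rewrite /X' => h1.
have -> : p ^ (s + s) * s`! * s`! * B * (X * B) = X * (p ^ s * s`! * B * (p ^ s * s`! * B)) * 1 by rewrite expnD; ring.
rewrite h1; rewrite expnD; ring.
Qed.

Lemma Psq p j : 0 < p -> P p j ^ 2 = \prod_(0 <= k < p.-1) (j*p*(j*p+p) + k.+1 * (p - k.+1)).
Proof.
move=> p0.
rewrite expnS expn1 {2}/P big_nat_rev /P -big_split /=.
rewrite big_nat_cond [RHS]big_nat_cond; apply: eq_bigr => k /andP[/andP[_ kp] _].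
rewrite add0n.
have [c hc] : exists c, p = k.+1 + c by exists (p - k.+1); lia.
have -> : p.-1 - k.+1 = c.-1 by lia.
have c0 : 0 < c by lia.
rewrite prednK // hc addKn.
ring.
Qed.

Section R.
Local Open Scope ring_scope.

Lemma L2 (d : int) (a c : nat -> int) n :
  (forall k, (d %| a k - c k)%Z) ->
  (d %| \prod_(0 <= k < n) a k - \prod_(0 <= k < n) c k)%Z.
Proof.
move=> H; elim: n => [|n IH]; first by rewrite !big_geq // subrr dvdz0.
rewrite !big_nat_recr //=.
have -> : (\prod_(0 <= i < n) a i * a n - \prod_(0 <= i < n) c i * c n =
   (\prod_(0 <= i < n) a i - \prod_(0 <= i < n) c i) * a n + \prod_(0 <= i < n) c i * (a n - c n)) by ring.
by apply: rpredD; [apply: dvdz_mulr | apply: dvdz_mull].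
Qed.

Fixpoint S (b : nat -> nat) n : nat :=
  if n is n'.+1 then (S b n' * b n' + \prod_(0 <= k < n') b k)%N else 0%N.

Lemma prodZ (F : nat -> nat) n : ((\prod_(0<=k<n) F k)%N)%:Z = \prod_(0<=k<n) (F k)%:Z.
Proof. by rewrite -natz natr_prod; apply: eq_bigr => i _; rewrite natz. Qed.

Lemma L1 (b : nat -> nat) (G1 G2 q : int) n :
  (q %| G1)%Z -> (q %| G2)%Z ->
  ((G1 - G2) * q %| \prod_(0<=k<n) (G1 + (b k)%:Z) - \prod_(0<=k<n) (G2 + (b k)%:Z)
      - (G1 - G2) * (S b n)%:Z)%Z.
Proof.
move=> h1 h2.
have hv : forall m, (q %| \prod_(0<=k<m) (G2 + (b k)%:Z) - (\prod_(0<=k<m) b k)%N%:Z)%Z.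
  move=> m; rewrite prodZ; apply: L2 => k.
  by rewrite addrK.
elim: n => [|n IH]; first by rewrite !big_geq //= subrr mulr0 subr0 dvdz0.
rewrite !big_nat_recr //= PoszD PoszM.
set U := \prod_(0 <= i < n) (G1 + (b i)%:Z).
set V := \prod_(0 <= i < n) (G2 + (b i)%:Z).
set W := (\prod_(0 <= i < n) b i)%N.
have -> : U * (G1 + (b n)%:Z) - V * (G2 + (b n)%:Z) - (G1 - G2) * ((S b n)%:Z * (b n)%:Z + W%:Z)
  = (U - V - (G1 - G2) * (S b n)%:Z) * (G1 + (b n)%:Z) + (G1 - G2) * (V - W%:Z)
     + (G1 - G2) * (S b n)%:Z * G1 by ring.
apply: rpredD; first apply: rpredD.
- exact: dvdz_mulr.
- by apply: dvdz_mul; [exact: dvdzz | exact: hv].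
- by rewrite -mulrA; apply: dvdz_mul; [exact: dvdzz | exact: dvdz_mull].
Qed.

Lemma SF (F : fieldType) (b : nat -> nat) n :
  (forall k, (k < n)%N -> (b k)%:R != 0 :> F) ->
  (S b n)%:R = (\prod_(0<=k<n) b k)%N%:R * \sum_(0<=k<n) ((b k)%:R)^-1 :> F.
Proof.
elim: n => [|n IH] H; first by rewrite !big_geq // mulr0.
rewrite /= natrD natrM IH; last by move=> k kn; apply: H; lia.
rewrite !big_nat_recr //= natrM mulrDr.
have hn := H n (ltnSn n).
by field.
Qed.

Lemma sumsq n : (6 * \sum_(0 <= k < n.+1) k ^ 2 = n * n.+1 * (2 * n).+1)%N.
Proof.
elim: n => [|n IH]; first by rewrite big_nat1.
rewrite big_nat_recr //= mulnDr IH. ring.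
Qed.

Lemma sum_Fp (p : nat) (G : 'F_p -> 'F_p) : prime p ->
  \sum_(x : 'F_p) G x = \sum_(0 <= i < p) G (i%:R).
Proof.
move=> pr.
rewrite (eq_bigr (fun x : 'F_p => G ((nat_of_ord x)%:R))); last by move=> x _; rewrite natr_Zp.
rewrite -(big_mkord xpredT (fun i => G (i%:R))).
have : forall N, N = p -> \sum_(0 <= i < N) G (i%:R) = \sum_(0 <= i < p) G (i%:R) by move=> N ->.
by apply; apply: Fp_cast.
Qed.

Lemma Sdiv p : prime p -> (5 <= p)%N -> (p %| S (fun k => k.+1 * (p - k.+1)) p.-1)%N.
Proof.
move=> pr p5.
have ch := pchar_Fp pr.
rewrite (dvdn_pcharf ch).
have nz : forall k, (k < p)%N -> (0 < k)%N -> (k%:R : 'F_p) != 0.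
  move=> k kp k0; rewrite -(dvdn_pcharf ch); apply/negP => /dvdn_leq; lia.
rewrite SF; last first.
  move=> k kp; rewrite natrM mulf_neq0 //; apply: nz; lia.
apply/eqP.
have -> : \sum_(0 <= k < p.-1) (((k.+1 * (p - k.+1))%N)%:R : 'F_p)^-1
    = - \sum_(0 <= k < p.-1) (((k.+1)%:R : 'F_p) ^+ 2)^-1.
  rewrite -sumrN big_nat_cond [RHS]big_nat_cond; apply: eq_bigr => k /andP[/andP[_ kp] _].
  rewrite natrM natrB; last by lia.
  rewrite (pchar_Fp_0 pr) sub0r mulrN invrN expr2; done.
have -> : \sum_(0 <= k < p.-1) (((k.+1)%:R : 'F_p) ^+ 2)^-1
    = \sum_(0 <= k < p) (((k%:R : 'F_p)) ^+ 2)^-1.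
  have : forall N, N = p -> \sum_(0 <= k < p.-1) (((k.+1)%:R : 'F_p) ^+ 2)^-1
    = \sum_(0 <= k < N) (((k%:R : 'F_p)) ^+ 2)^-1.
    move=> N eN; have -> : N = p.-1.+1 by rewrite eN prednK ?prime_gt0.
    by rewrite big_nat_recl // expr2 mulr0 invr0 add0r.
  by apply.
rewrite -(sum_Fp (fun x => (x ^+ 2)^-1)) //.
rewrite (reindex_inj (@invr_inj _)) /=.
have -> : \sum_(x : 'F_p) (x^-1 ^+ 2)^-1 = \sum_(x : 'F_p) x^+2.
  by apply: eq_bigr => x _; rewrite exprVn invrK.
rewrite (sum_Fp (fun x => x ^+ 2)) //.
have e6 : (6%:R : 'F_p) != 0.
  rewrite -(dvdn_pcharf ch); apply/negP => h.
  have le6 := dvdn_leq (isT : (0 < 6)%N) h.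
  have : p = 5%N \/ p = 6%N by lia.
  by case=> e; move: h pr; rewrite e.
have : (6%:R : 'F_p) * \sum_(0 <= i < p) (i%:R : 'F_p) ^+ 2 = 0.
  rewrite (eq_bigr (fun i => ((i ^ 2)%N)%:R)); last by move=> i _; rewrite natrX.
  rewrite -natr_sum -natrM -(prednK (prime_gt0 pr)) sumsq prednK ?prime_gt0 //.
  by rewrite !natrM (pchar_Fp_0 pr) mulr0 mul0r.
move/eqP; rewrite mulf_eq0 (negPf e6) /= => /eqP ->.
by rewrite oppr0 mulr0.
Qed.

End R.

Section E.
Local Open Scope ring_scope.
Lemma Pstep p s i : prime p -> (5 <= p)%N ->
  (((p ^ 3 * s)%N)%:Z %| ((P p (i+s) ^ 2)%N)%:Z - ((P p i ^ 2)%N)%:Z)%Z.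
Proof.
move=> pr p5.
rewrite !Psq ?prime_gt0 // !prodZ.
under eq_bigr do rewrite PoszD.
under [X in _ - X]eq_bigr do rewrite PoszD.
set b := fun k => (k.+1 * (p - k.+1))%N.
set G1 := ((i + s) * p * ((i + s) * p + p))%N%:Z.
set G2 := (i * p * (i * p + p))%N%:Z.
have h1 : ((p ^ 2)%N%:Z %| G1)%Z.
  rewrite /G1; apply/dvdzP; exists ((i+s)*(i+s+1))%N%:Z; rewrite -PoszM; congr Posz; ring.
have h2 : ((p ^ 2)%N%:Z %| G2)%Z.
  rewrite /G2; apply/dvdzP; exists (i*(i+1))%N%:Z; rewrite -PoszM; congr Posz; ring.
have [z hz] := dvdzP (L1 b p.-1 h1 h2).
have [w hw] := dvdnP (Sdiv pr p5).
rewrite -/b.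
set U := \prod_(0 <= k < p.-1) _.
set V := \prod_(0 <= k < p.-1) _.
have -> : U - V = z * ((G1 - G2) * (p ^ 2)%N%:Z) + (G1 - G2) * (S b p.-1)%:Z by rewrite -hz; ring.
rewrite hw /G1 /G2.
apply/dvdzP.
exists (z * p%:Z * (2*i+s+1)%N%:Z + (2*i+s+1)%N%:Z * w%:Z).
rewrite !expnS !expn0 !muln1 !(PoszM, PoszD). ring.
Qed.

Lemma P3 j : P 3 j = ((3*j+1)*(3*j+2))%N.
Proof. rewrite /P /= !big_nat_recr //= big_geq //; ring. Qed.

Lemma L3 s n : ((27*s)%N%:Z %| (\prod_(0<=i<n) P 3 (i+s))%N%:Z
   - (\prod_(0<=i<n) P 3 i)%N%:Z * (1 + 18*s*n*(n+s))%N%:Z)%Z.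
Proof.
elim: n => [|n IH] /=.
  by rewrite !big_geq // muln0 mul0n addn0 mulr1 subrr dvdz0.
have [z hz] := dvdzP IH.
rewrite !big_nat_recr //= !PoszM.
set An := (\prod_(0 <= i < n) P 3 (i + s))%N%:Z in hz *.
set Bn := (\prod_(0 <= i < n) P 3 i)%N%:Z in hz *.
have eA : An = z * (27*s)%N%:Z + Bn * (1 + 18 * s * n * (n + s))%N%:Z by rewrite -hz; ring.
rewrite eA !P3.
apply/dvdzP.
exists (z * ((3 * (n + s) + 1) * (3 * (n + s) + 2))%N%:Z
   + Bn * (2*n+s+1)%:Z * (-1 - 6 * n%:Z^+2 - 6 * n%:Z + 6 * s%:Z * (n * (n+s))%N%:Z)).
rewrite !(PoszM, PoszD). ring.
Qed.

Lemma prod_mod (F G : nat -> nat) d n : (forall k, F k = G k %[mod d])%N ->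
  (\prod_(0<=k<n) F k = \prod_(0<=k<n) G k %[mod d])%N.
Proof.
move=> H; elim: n => [|n IH]; first by rewrite !big_geq.
by rewrite !big_nat_recr //= -modnMm IH H modnMm.
Qed.

Lemma P_mod p j : (P p j = P p 0 %[mod p])%N.
Proof. by apply: prod_mod => k; rewrite mul0n add0n modnMDl. Qed.

Lemma copP p j : prime p -> coprime p (P p j).
Proof.
move=> pr; rewrite -coprime_modr P_mod coprime_modr /P big_nat_cond.
apply: (big_ind (coprime p)) => //; first by rewrite coprimen1.
  by move=> x y hx hy; rewrite coprimeMr hx hy.
move=> k /andP[/andP[_ kp] _].
rewrite mul0n add0n prime_coprime //; apply/negP => /dvdn_leq; move: (prime_gt1 pr); lia.
Qed.

Lemma PoszX2 n : ((n ^ 2)%N)%:Z = n%:Z ^+ 2.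
Proof. by rewrite expnS expn1 expr2 PoszM. Qed.

Lemma side5 p r u C : prime p -> (5 <= p)%N -> (p ^ r.-1 %| C * u)%N ->
  ((p ^ (r.-1 + 3))%N%:Z %| C%:Z * ('C(2*u*p, u*p)%:Z - 'C(2*u, u)%:Z))%Z.
Proof.
move=> pr p5 hC.
have krel := key_rel u (prime_gt0 pr).
set B := (\prod_(0<=i<u) P p i)%N in krel *.
set A := (\prod_(0<=i<u) P p (i+u))%N in krel *.
set X := 'C(2*u*p, u*p) in krel *.
set X' := 'C(2*u, u) in krel *.
have hsq : (((p ^ 3 * u)%N)%:Z %| A%:Z ^+ 2 - B%:Z ^+ 2)%Z.
  rewrite /A /B !prodZ -!prodrXl.
  by apply: L2 => k; rewrite -!PoszX2; apply: Pstep.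
have cB : coprime p B.
  by apply: (big_ind (coprime p)) => //; [exact: coprimen1 | move=> x y hx hy; rewrite coprimeMr hx hy | move=> i _; apply: copP].
have cAB : coprime p (A + B).
  have eAB : (A = B %[mod p])%N.
    rewrite /A /B; apply: prod_mod => k.
    by rewrite P_mod (P_mod p k).
  rewrite -coprime_modr -modnDml eAB modnDml addnn -mul2n coprime_modr coprimeMr cB andbT.
  rewrite prime_coprime //; apply/negP => /dvdn_leq h2.
  move: p5; lia.
have [w hw] := dvdnP hC.
have [v hv] := dvdzP hsq.
have e : (A%:Z + B%:Z) * (B%:Z * (C%:Z * (X%:Z - X'%:Z))) = C%:Z * X'%:Z * (A%:Z ^+ 2 - B%:Z ^+ 2).
  have kz : X%:Z * B%:Z = X'%:Z * A%:Z by rewrite -!PoszM krel.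
  rewrite expr2 expr2.
  have -> : (A%:Z + B%:Z) * (B%:Z * (C%:Z * (X%:Z - X'%:Z)))
    = C%:Z * (A%:Z + B%:Z) * (X%:Z * B%:Z) - C%:Z * (A%:Z + B%:Z) * B%:Z * X'%:Z by ring.
  rewrite kz; ring.
have : ((p ^ (r.-1 + 3))%N%:Z %| (A%:Z + B%:Z) * (B%:Z * (C%:Z * (X%:Z - X'%:Z))))%Z.
  rewrite e hv; apply/dvdzP; exists (X'%:Z * v * w%:Z).
  have -> : C%:Z * X'%:Z * (v * (p ^ 3 * u)%N%:Z) = X'%:Z * v * (p^3)%N%:Z * (C * u)%N%:Z by rewrite !PoszM; ring.
  by rewrite hw expnD !PoszM; ring.
rewrite -PoszD Gauss_dvdzr; last by rewrite coprimezE /= coprimeXl.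
rewrite Gauss_dvdzr //; by rewrite coprimezE /= coprimeXl.
Qed.

Lemma side3 r u C : (3 ^ r.-1 %| C * u)%N ->
  ((3 ^ (r.-1 + 3))%N%:Z %| C%:Z * ('C(2*u*3, u*3)%:Z - 'C(2*u, u)%:Z * (1 + 36 * u^3)%N%:Z))%Z.
Proof.
move=> hC.
have krel := key_rel u (isT : (0 < 3)%N).
set B := (\prod_(0<=i<u) P 3 i)%N in krel *.
set A := (\prod_(0<=i<u) P 3 (i+u))%N in krel *.
set X := 'C(2*u*3, u*3) in krel *.
set X' := 'C(2*u, u) in krel *.
have cB : coprime 3 B.
  apply: (big_ind (coprime 3)); [exact: coprimen1 | move=> x y hx hy; rewrite coprimeMr hx hy // | move=> i _; exact: copP].
have h3 := L3 u u.
have eK : (1 + 18 * u * u * (u + u) = 1 + 36 * u ^ 3)%N by ring.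
rewrite eK -/A -/B in h3.
have [w hw] := dvdnP hC.
have [v hv] := dvdzP h3.
have kz : X%:Z * B%:Z = X'%:Z * A%:Z by rewrite -!PoszM krel.
have : ((3 ^ (r.-1 + 3))%N%:Z %| B%:Z * (C%:Z * (X%:Z - X'%:Z * (1 + 36 * u ^ 3)%N%:Z)))%Z.
  have -> : B%:Z * (C%:Z * (X%:Z - X'%:Z * (1 + 36 * u ^ 3)%N%:Z))
     = C%:Z * X'%:Z * (A%:Z - B%:Z * (1 + 36 * u ^ 3)%N%:Z).
    have -> : B%:Z * (C%:Z * (X%:Z - X'%:Z * (1 + 36 * u ^ 3)%N%:Z))
      = C%:Z * (X%:Z * B%:Z) - C%:Z * X'%:Z * B%:Z * (1 + 36 * u ^ 3)%N%:Z by ring.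
    rewrite kz; ring.
  rewrite hv; apply/dvdzP; exists (X'%:Z * v * w%:Z).
  have -> : C%:Z * X'%:Z * (v * (27 * u)%N%:Z) = X'%:Z * v * 27 * (C * u)%N%:Z by rewrite !PoszM; ring.
  rewrite hw expnD !PoszM; ring.
by rewrite Gauss_dvdzr // coprimezE /= coprimeXl.
Qed.

Lemma nat_modE a b d : ((d%:Z) %| a%:Z - b%:Z)%Z -> (a = b %[mod d])%N.
Proof.
move=> h; have : (a%:Z == b%:Z %[mod d%:Z])%Z by rewrite eqz_mod_dvd.
by rewrite !modz_nat => /eqP [].
Qed.

Lemma hdiag n u d : (d %| n)%N -> (d %| 'C(n, u) * u)%N.
Proof.
case: u => [|u] h; first by rewrite muln0 dvdn0.
by rewrite mulnC -mul_bin_diag dvdn_mulr.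
Qed.

Lemma cube3 (n : nat) : (3 %| n%:Z ^+ 3 - n%:Z)%Z.
Proof.
rewrite (div.divn_eq n 3).
have : (n %% 3 < 3)%N by rewrite ltn_mod.
move: (n %/ 3)%N (n %% 3)%N => q [|[|[|ρ]]] // _; apply/dvdzP.
- exists (9 * q%:Z ^+ 3 - q%:Z); rewrite !(PoszD, PoszM); ring.
- exists (9 * q%:Z ^+ 3 + 9 * q%:Z ^+ 2 + 2 * q%:Z); rewrite !(PoszD, PoszM); ring.
- exists (9 * q%:Z ^+ 3 + 18 * q%:Z ^+ 2 + 11 * q%:Z + 2); rewrite !(PoszD, PoszM); ring.
Qed.

Lemma PoszX n k : ((n ^ k)%N)%:Z = n%:Z ^+ k.
Proof. by rewrite -!natz natrX. Qed.

Lemma comb (d C X X' Y Y' Ks Kt R : int) : (d %| C * (X - X' * Ks))%Z ->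
  (d %| C * (Y - Y' * Kt))%Z -> (d %| C * X' * Y' * (Ks * Kt - R))%Z ->
  (d %| C * X * Y - C * X' * Y' * R)%Z.
Proof.
move=> h1 h2 h3.
have -> : C * X * Y - C * X' * Y' * R = C * (X - X' * Ks) * Y + X' * Ks * (C * (Y - Y' * Kt))
   + C * X' * Y' * (Ks * Kt - R) by ring.
by apply: rpredD => //; apply: rpredD; [apply: dvdz_mulr | apply: dvdz_mull].
Qed.

Lemma comb1 (d C X X' Y Y' Ks Kt : int) : (d %| C * (X - X' * Ks))%Z ->
  (d %| C * (Y - Y' * Kt))%Z -> (d %| C * X' * Y' * (Ks * Kt - 1))%Z ->
  (d %| C * X * Y - C * X' * Y')%Z.
Proof. by move=> h1 h2 h3; rewrite -[C * X' * Y']mulr1; apply: comb h1 h2 h3. Qed.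

End E.

Theorem lemma2p11 (p r m s : nat) :
  prime p -> odd p -> 0 < r -> 0 < m ->
  1 <= s <= m * p ^ r.-1 ->
  'C(m * p ^ r.-1, s) * 'C(2 * s * p, s * p)
    * 'C(2 * (m * p ^ r.-1 - s) * p, (m * p ^ r.-1 - s) * p)
  = (if (r == 1) && (p == 3)
     then 'C(m, s) * 'C(2 * s, s) * 'C(2 * (m - s), m - s) * (1 + 9 * m)
     else 'C(m * p ^ r.-1, s) * 'C(2 * s, s)
            * 'C(2 * (m * p ^ r.-1 - s), m * p ^ r.-1 - s))
    %[mod p ^ (r + 2)].
Proof.
move=> pr op r0 m0 /andP[s1 sN].
have hN : p ^ r.-1 %| m * p ^ r.-1 by apply: dvdn_mull.
have hCs : p ^ r.-1 %| 'C(m * p ^ r.-1, s) * s by apply: hdiag.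
have hCt : p ^ r.-1 %| 'C(m * p ^ r.-1, s) * (m * p ^ r.-1 - s).
  by rewrite -(bin_sub sN); apply: hdiag.
have er : r + 2 = r.-1 + 3 by lia.
have [p3|p3] := eqVneq p 3.
- subst p.
  have h1 := side3 hCs.
  have h2 := side3 hCt.
  rewrite er.
  case: (eqVneq r 1) => [r1|rn1] /=.
  + subst r. move: h1 h2; rewrite /= expn0 !muln1 => h1 h2.
    apply: nat_modE; rewrite !PoszM.
    apply: (comb h1 h2).
    apply: dvdz_mull.
    have -> : (3 ^ (0 + 3))%N = 27 by [].
    move: sN; rewrite muln1 => sN.
    set t := m - s.
    have em : m = s + t by rewrite /t; lia.
    rewrite em !(PoszD, PoszM, PoszX).
    have [a ha] := dvdzP (cube3 s).
    have [b hb] := dvdzP (cube3 t).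
    have -> : ((1 + 36 * s%:Z ^+ 3) * (1 + 36 * t%:Z ^+ 3) - (1 + 9 * (s%:Z + t%:Z))
      = 27 * (s%:Z ^+ 3 + t%:Z ^+ 3 + 48 * s%:Z ^+ 3 * t%:Z ^+ 3) + 9 * (s%:Z ^+ 3 - s%:Z)
        + 9 * (t%:Z ^+ 3 - t%:Z))%R by ring.
    rewrite ha hb; apply/dvdzP.
    exists (s%:Z ^+ 3 + t%:Z ^+ 3 + 48 * s%:Z ^+ 3 * t%:Z ^+ 3 + a + b)%R; ring.
  + apply: nat_modE; rewrite !PoszM.
    apply: (comb1 h1 h2).
    destruct r as [|[|r']]; [by [] | by [] | ].
    move: hCs sN; rewrite /= => hCs sN.
    set N := m * 3 ^ r'.+1 in hCs sN *.
    set t := N - s.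
    set C := 'C(N, s) in hCs *.
    have eN : (N%:Z = s%:Z + t%:Z)%R by rewrite /t -PoszD subnKC.
    have [w hw] := dvdnP hCs.
    rewrite !(PoszD, PoszM, PoszX).
    have -> : (C%:Z * 'C(2 * s, s)%:Z * 'C(2 * t, t)%:Z *
       ((1 + 36 * s%:Z ^+ 3) * (1 + 36 * t%:Z ^+ 3) - 1)
     = 'C(2 * s, s)%:Z * 'C(2 * t, t)%:Z * C%:Z * 36 * ((s%:Z + t%:Z) * ((s%:Z + t%:Z) ^+ 2 - 3 * s%:Z * t%:Z))
       + 1296 * 'C(2 * s, s)%:Z * 'C(2 * t, t)%:Z * s%:Z ^+ 2 * t%:Z ^+ 3 * (C%:Z * s%:Z))%R by ring.
    rewrite -eN -[(C%:Z * s%:Z)%R]PoszM hw /N !(PoszM, PoszX).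
    rewrite exprD !exprS expr0.
    apply/dvdzP.
    exists ('C(2 * s, s)%:Z * 'C(2 * t, t)%:Z * C%:Z * 4 * m%:Z * (3 * m%:Z ^+ 2 * (3%:Z ^+ r') ^+ 2 - s%:Z * t%:Z)
      + 48 * 'C(2 * s, s)%:Z * 'C(2 * t, t)%:Z * s%:Z ^+ 2 * t%:Z ^+ 3 * w%:Z)%R.
    ring.
- have p5 : 5 <= p.
    have p2 : p != 2 by apply/eqP => e; rewrite e in op.
    have p4 : p != 4 by apply/eqP => e; rewrite e in op.
    have := prime_gt1 pr; lia.
  have h1 := side5 pr p5 hCs.
  have h2 := side5 pr p5 hCt.
  rewrite andbF.
  rewrite er; apply: nat_modE; rewrite !PoszM.
  apply: (@comb1 _ _ _ _ _ _ 1%R 1%R); rewrite ?mulr1 //.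
  by rewrite subrr mulr0 dvdz0.
Qed.
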